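(* Every polynomial functor on $\mathsf{Nom}$ has a canonical locally monotone extension to $\mathrm{Kl}(\mathcal{P}_{\mathsf{fs}})$.
   Context: Fix a countably infinite set $\mathbb{A}$ of names; $\mathsf{Nom}$ is the category of nominal sets and equivariant maps. $\mathcal{P}_{\mathsf{fs}}$ is the monad of finitely supported subsets on $\mathsf{Nom}$, with unit $x\mapsto\{x\}$ and multiplication union; $\mathrm{Kl}(\mathcal{P}_{\mathsf{fs}})$ is its Kleisli category and $J\colon\mathsf{Nom}\to\mathrm{Kl}(\mathcal{P}_{\mathsf{fs}})$ the canonical functor. Polynomial functors are those generated by the grammar $F::=C\mid\mathrm{Id}\mid F\times F\mid\coprod_{i\in I}F_i$, with $C$ ranging over constant functors and $I$ arbitrary. An extension of $F$ is an endofunctor $\overline{F}$ on $\mathrm{Kl}(\mathcal{P}_{\mathsf{fs}})$ with $\overline{F}J=JF$; locally monotone means monotone on hom-sets ordered pointwise by inclusion. The canonical extension is built along the grammar: constants and identity extend trivially; coproducts via $\overline{F+G}(f)=[T\mathsf{inl},T\mathsf{inr}]\cdot(\overline{F}f+\overline{G}f)$; finite products via the double strength $d\colon TX\times TY\to T(X\times Y)$ of the commutative monad $\mathcal{P}_{\mathsf{fs}}$ (with strength $(x,S)\mapsto\{(x,s):s\in S\}$), i.e. $\overline{F\times G}(f)=d\cdot(\overline{F}f\times\overline{G}f)$. *)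

(* Defs.v *)
From Stdlib Require Import List.

Definition atom := nat.

Record perm : Type := Perm {
  pf : atom -> atom;
  pinv : atom -> atom;
  pf_pinv : forall a, pf (pinv a) = a;
  pinv_pf : forall a, pinv (pf a) = a;
  pf_finite : exists n, forall a, n <= a -> pf a = a
}.

Definition is_action {X : Type} (act : perm -> X -> X) : Prop :=
  (forall (p : perm) (x : X), (forall a, pf p a = a) -> act p x = x) /\
  (forall (p q r : perm) (x : X), (forall a, pf r a = pf p (pf q a)) ->
      act r x = act p (act q x)).

Definition supports {X : Type} (act : perm -> X -> X) (A : list atom) (x : X)
  : Prop :=
  forall p : perm, (forall a, In a A -> pf p a = a) -> act p x = x.

Definition fin_supp {X : Type} (act : perm -> X -> X) (x : X) : Prop :=
  exists A : list atom, supports act A x.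

Definition is_nominal {X : Type} (act : perm -> X -> X) : Prop :=
  is_action act /\ forall x, fin_supp act x.

Record nomset : Type := NomSet {
  car :> Type;
  nact : perm -> car -> car;
  nact_nominal : is_nominal nact
}.

Definition equivariant {X Y : Type} (aX : perm -> X -> X) (aY : perm -> Y -> Y)
  (f : X -> Y) : Prop :=
  forall p x, f (aX p x) = aY p (f x).

Definition pset (X : Type) : Type := X -> Prop.

Definition Pmap {X Y : Type} (f : X -> Y) (S : pset X) : pset Y :=
  fun y => exists x, S x /\ f x = y.

Definition eta {X : Type} (x : X) : pset X := fun y => y = x.

Definition mu {X : Type} (SS : pset (pset X)) : pset X :=
  fun x => exists S, SS S /\ S x.

Definition pact {X : Type} (act : perm -> X -> X) (p : perm) (S : pset X)
  : pset X := Pmap (act p) S.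

(** Kleisli morphisms X -> P_fs Y: equivariant maps into finitely supported
    subsets. *)
Definition kl_mor {X Y : Type} (aX : perm -> X -> X) (aY : perm -> Y -> Y)
  (f : X -> pset Y) : Prop :=
  (forall x, fin_supp (pact aY) (f x)) /\ equivariant aX (pact aY) f.

Definition kcomp {X Y Z : Type} (g : Y -> pset Z) (f : X -> pset Y)
  : X -> pset Z := fun x => mu (Pmap g (f x)).

Definition J {X Y : Type} (h : X -> Y) : X -> pset Y := fun x => eta (h x).

Definition kl_le {X Y : Type} (f g : X -> pset Y) : Prop :=
  forall x y, f x y -> g x y.

Definition strength {X Y : Type} (xS : X * pset Y) : pset (X * Y) :=
  Pmap (fun s => (fst xS, s)) (snd xS).

Definition costrength {X Y : Type} (Sy : pset X * Y) : pset (X * Y) :=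
  Pmap (fun s => (s, snd Sy)) (fst Sy).

Definition dstrength {X Y : Type} (ST : pset X * pset Y) : pset (X * Y) :=
  mu (Pmap (@strength X Y) (costrength ST)).

Inductive poly : Type :=
| PConst (C : nomset)
| PId
| PProd (F G : poly)
| PCoprod (I : Type) (Fs : I -> poly).

Fixpoint Fobj (F : poly) (X : Type) : Type :=
  match F with
  | PConst C => car C
  | PId => X
  | PProd F1 F2 => (Fobj F1 X * Fobj F2 X)%type
  | PCoprod Ix Fs => {i : Ix & Fobj (Fs i) X}
  end.

Fixpoint Fact (F : poly) (X : Type) (a : perm -> X -> X)
  : perm -> Fobj F X -> Fobj F X :=
  match F return perm -> Fobj F X -> Fobj F X with
  | PConst C => nact C
  | PId => a
  | PProd F1 F2 => fun p u => (Fact F1 X a p (fst u), Fact F2 X a p (snd u))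
  | PCoprod Ix Fs => fun p u =>
      existT (fun i => Fobj (Fs i) X) (projT1 u)
             (Fact (Fs (projT1 u)) X a p (projT2 u))
  end.

Fixpoint Fmap (F : poly) {X Y : Type} (h : X -> Y) : Fobj F X -> Fobj F Y :=
  match F return Fobj F X -> Fobj F Y with
  | PConst C => fun c => c
  | PId => h
  | PProd F1 F2 => fun u => (Fmap F1 h (fst u), Fmap F2 h (snd u))
  | PCoprod Ix Fs => fun u =>
      existT (fun i => Fobj (Fs i) Y) (projT1 u) (Fmap (Fs (projT1 u)) h (projT2 u))
  end.

Fixpoint Fext (F : poly) {X Y : Type} (f : X -> pset Y)
  : Fobj F X -> pset (Fobj F Y) :=
  match F return Fobj F X -> pset (Fobj F Y) with
  | PConst C => fun c => eta c
  | PId => f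
  | PProd F1 F2 => fun u =>
      dstrength (Fext F1 f (fst u), Fext F2 f (snd u))
  | PCoprod Ix Fs => fun u =>
      Pmap (fun v => existT (fun i => Fobj (Fs i) Y) (projT1 u) v)
           (Fext (Fs (projT1 u)) f (projT2 u))
  end.

(* Main.v *)
Require Import Defs.
From Stdlib Require Import List FunctionalExtensionality PropExtensionality.

Lemma pset_ext {X} (S T : pset X) : (forall x, S x <-> T x) -> S = T.
Proof.
  intro H; apply functional_extensionality; intro x;
  apply propositional_extensionality; apply H.
Qed.

Lemma dstr_iff {A B} (S : pset A) (T : pset B) z :
  dstrength (S, T) z <-> S (fst z) /\ T (snd z).
Proof.
  unfold dstrength, mu, Pmap, costrength, strength; simpl; split.
  - intros [W [[c [[s [Hs <-]] <-]] [t [Ht <-]]]]; simpl in *; auto.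
  - destruct z as [z1 z2]; simpl; intros [H1 H2].
    exists (fun z => exists s, T s /\ (z1, s) = z); split.
    + exists (z1, T); split; [exists z1; auto | reflexivity].
    + exists z2; auto.
Qed.

Lemma kcomp_iff {X Y Z} (g : Y -> pset Z) (f : X -> pset Y) x z :
  kcomp g f x z <-> exists y, f x y /\ g y z.
Proof.
  unfold kcomp, mu, Pmap; split.
  - intros [S [[y [Hy <-]] Hz]]; eauto.
  - intros [y [Hy Hz]]; exists (g y); eauto.
Qed.

Lemma pact_dstr {A B} (a1 : perm -> A -> A) (a2 : perm -> B -> B) p S T :
  pact (fun p u => (a1 p (fst u), a2 p (snd u))) p (dstrength (S, T))
  = dstrength (pact a1 p S, pact a2 p T).
Proof.
  apply pset_ext; intros [z1 z2]; split.
  - intros [[x1 x2] [Hx Heq]]; apply dstr_iff in Hx; simpl in *.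
    injection Heq; intros; subst. apply dstr_iff; simpl.
    destruct Hx; split; [exists x1|exists x2]; auto.
  - intro H; apply dstr_iff in H; simpl in H.
    destruct H as [[x1 [H1 E1]] [x2 [H2 E2]]].
    exists (x1, x2); split; [apply dstr_iff; simpl; auto | simpl; subst; reflexivity].
Qed.

Lemma pact_inj {I} (P : I -> Type) (a : forall i, perm -> P i -> P i) i p S :
  pact (fun p u => existT P (projT1 u) (a (projT1 u) p (projT2 u))) p
       (Pmap (existT P i) S)
  = Pmap (existT P i) (pact (a i) p S).
Proof.
  apply pset_ext; intro y; unfold pact, Pmap; split.
  - intros [x [[w [Hw <-]] <-]]; simpl. exists (a i p w); split; eauto.
  - intros [x [[w [Hw <-]] <-]]. exists (existT P i w); split; eauto.
Qed.

Lemma Fact_action F X a : is_action a -> is_action (Fact F X a).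
Proof.
  induction F as [C| |F1 IH1 F2 IH2|I Fs IH]; intros Ha.
  - exact (proj1 (nact_nominal C)).
  - exact Ha.
  - destruct (IH1 Ha) as [i1 c1], (IH2 Ha) as [i2 c2]. split.
    + intros p [u1 u2] Hp; simpl; rewrite (i1 p u1 Hp), (i2 p u2 Hp); reflexivity.
    + intros p q r [u1 u2] H; simpl; rewrite (c1 p q r u1 H), (c2 p q r u2 H); reflexivity.
  - split.
    + intros p [i v] Hp; simpl. destruct (IH i Ha) as [i1 _].
      rewrite (i1 p v Hp). reflexivity.
    + intros p q r [i v] H; simpl. destruct (IH i Ha) as [_ c1].
      rewrite (c1 p q r v H). reflexivity.
Qed.

Lemma Fact_supp F X a : (forall x, fin_supp a x) -> forall u, fin_supp (Fact F X a) u.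
Proof.
  induction F as [C| |F1 IH1 F2 IH2|I Fs IH]; intros H.
  - exact (proj2 (nact_nominal C)).
  - exact H.
  - intros [u1 u2]. destruct (IH1 H u1) as [A HA], (IH2 H u2) as [B HB].
    exists (A ++ B); intros p Hp; simpl.
    f_equal; [apply HA|apply HB]; intros b Hb; apply Hp; apply in_or_app; auto.
  - intros [i v]. destruct (IH i H v) as [A HA]. exists A; intros p Hp; simpl.
    rewrite (HA p Hp); reflexivity.
Qed.

Lemma Fext_equiv F X Y (aX : perm -> X -> X) (aY : perm -> Y -> Y) (f : X -> pset Y) :
  equivariant aX (pact aY) f ->
  equivariant (Fact F X aX) (pact (Fact F Y aY)) (Fext F f).
Proof.
  unfold equivariant; induction F as [C| |F1 IH1 F2 IH2|I Fs IH]; intros Hf p u; simpl.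
  - apply pset_ext; intro y; unfold pact, Pmap, eta; split.
    + intros ->; eauto.
    + intros [x [-> <-]]; reflexivity.
  - apply Hf.
  - rewrite (IH1 Hf), (IH2 Hf). symmetry. apply pact_dstr.
  - destruct u as [i v]; simpl. rewrite (IH i Hf). symmetry.
    exact (pact_inj (fun i => Fobj (Fs i) Y) (fun i => Fact (Fs i) Y aY) i p _).
Qed.

Lemma Fext_supp F X Y (aY : perm -> Y -> Y) (f : X -> pset Y) :
  (forall x, fin_supp (pact aY) (f x)) ->
  forall u : Fobj F X, fin_supp (pact (Fact F Y aY)) (Fext F f u).
Proof.
  induction F as [C| |F1 IH1 F2 IH2|I Fs IH]; intros Hf u; simpl.
  - destruct (proj2 (nact_nominal C) u) as [A HA]. exists A; intros p Hp.
    apply pset_ext; intro y; unfold pact, Pmap, eta; split.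
    + intros [x [-> <-]]; apply HA; auto.
    + intros ->; exists u; split; auto.
  - apply Hf.
  - destruct u as [u1 u2]; simpl.
    destruct (IH1 Hf u1) as [A HA], (IH2 Hf u2) as [B HB].
    exists (A ++ B); intros p Hp.
    refine (eq_trans (pact_dstr _ _ _ _ _) _).
    rewrite (HA p), (HB p); [reflexivity| |];
      intros b Hb; apply Hp; apply in_or_app; auto.
  - destruct u as [i v]; simpl. destruct (IH i Hf v) as [A HA].
    exists A; intros p Hp.
    refine (eq_trans (pact_inj (fun i => Fobj (Fs i) Y) (fun i => Fact (Fs i) Y aY) i p _) _).
    rewrite (HA p Hp); reflexivity.
Qed.

Lemma Fext_eta F X (u : Fobj F X) : Fext F (@eta X) u = eta u.
Proof.
  induction F as [C| |F1 IH1 F2 IH2|I Fs IH]; simpl; try reflexivity.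
  - destruct u as [u1 u2]; simpl; rewrite IH1, IH2.
    apply pset_ext; intros [z1 z2]; split.
    + intro H; apply dstr_iff in H; destruct H as [H1 H2]; unfold eta in *; simpl in *; subst; reflexivity.
    + intro H; unfold eta in H; inversion H; subst; apply dstr_iff; simpl; split; reflexivity.
  - destruct u as [i v]; simpl; rewrite IH.
    apply pset_ext; intro y; unfold Pmap, eta; split.
    + intros [x [-> <-]]; reflexivity.
    + intros ->; eauto.
Qed.

Lemma Fext_comp F X Y Z (f : X -> pset Y) (g : Y -> pset Z) (u : Fobj F X) :
  Fext F (kcomp g f) u = kcomp (Fext F g) (Fext F f) u.
Proof.
  induction F as [C| |F1 IH1 F2 IH2|I Fs IH]; simpl; try reflexivity.
  - apply pset_ext; intro z; rewrite kcomp_iff; unfold eta; split.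
    + intros ->; eauto.
    + intros [y [-> H]]; exact H.
  - destruct u as [u1 u2]; simpl; rewrite IH1, IH2.
    apply pset_ext; intros [z1 z2]; rewrite kcomp_iff; split.
    + intro H; apply dstr_iff in H; destruct H as [H1 H2].
      destruct (proj1 (kcomp_iff (Fext F1 g) (Fext F1 f) u1 z1) H1) as [y1 [A1 B1]].
      destruct (proj1 (kcomp_iff (Fext F2 g) (Fext F2 f) u2 z2) H2) as [y2 [A2 B2]].
      exists (y1, y2); split; apply dstr_iff; simpl; auto.
    + intros [[y1 y2] [H1 H2]]; apply dstr_iff in H1; apply dstr_iff in H2.
      apply dstr_iff; destruct H1, H2; split;
        [apply (proj2 (kcomp_iff (Fext F1 g) (Fext F1 f) u1 z1))
        |apply (proj2 (kcomp_iff (Fext F2 g) (Fext F2 f) u2 z2))]; eauto.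
  - destruct u as [i v]; simpl; rewrite IH.
    apply pset_ext; intro z; split.
    + intros [x [Hx <-]];
      destruct (proj1 (kcomp_iff (Fext (Fs i) g) (Fext (Fs i) f) v x) Hx) as [y [Hy Hyx]].
      apply kcomp_iff; exists (existT _ i y); split; [exists y; auto | simpl; exists x; auto].
    + intro H; destruct (proj1 (kcomp_iff (Fext (PCoprod I Fs) g) (Fext (PCoprod I Fs) f) (existT _ i v) z) H) as [y [[w [Hw <-]] Hz]].
      simpl in Hz; destruct Hz as [x [Hx <-]]. exists x; split; auto.
      apply (proj2 (kcomp_iff (Fext (Fs i) g) (Fext (Fs i) f) v x)); eauto.
Qed.

Lemma Fext_J F X Y (h : X -> Y) (u : Fobj F X) : Fext F (J h) u = J (Fmap F h) u.
Proof.
  induction F as [C| |F1 IH1 F2 IH2|I Fs IH]; simpl; try reflexivity.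
  - destruct u as [u1 u2]; simpl; rewrite IH1, IH2; unfold J.
    apply pset_ext; intros [z1 z2]; split.
    + intro H; apply dstr_iff in H; destruct H as [H1 H2]; unfold eta in *; simpl in *; subst; reflexivity.
    + intro H; unfold eta in H; inversion H; subst; apply dstr_iff; simpl; split; reflexivity.
  - destruct u as [i v]; simpl; rewrite IH; unfold J.
    apply pset_ext; intro y; unfold Pmap, eta; split.
    + intros [x [-> <-]]; reflexivity.
    + intros ->; eauto.
Qed.

Lemma Fext_mono F X Y (f g : X -> pset Y) : kl_le f g -> kl_le (Fext F f) (Fext F g).
Proof.
  intro H; induction F as [C| |F1 IH1 F2 IH2|I Fs IH]; simpl.
  - intros x y Hy; exact Hy.
  - exact H.
  - intros [u1 u2] z Hz; apply dstr_iff in Hz; apply dstr_iff; simpl in *.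
    destruct Hz; split; [apply IH1|apply IH2]; auto.
  - intros [i v] z [w [Hw <-]]; exists w; split; auto. apply IH; auto.
Qed.

Theorem corollary3p14 (F : poly) :
  (* F X is again a nominal set *)
  (forall X : nomset, is_nominal (Fact F X (nact X))) /\
  (* Fext F maps Kleisli morphisms X -> P_fs Y to Kleisli morphisms FX -> P_fs FY *)
  (forall (X Y : nomset) (f : X -> pset Y),
      kl_mor (nact X) (nact Y) f ->
      kl_mor (Fact F X (nact X)) (Fact F Y (nact Y)) (Fext F f)) /\
  (* preservation of Kleisli identities *)
  (forall X : nomset, Fext F (@eta X) = @eta (Fobj F X)) /\
  (* preservation of Kleisli composition *)
  (forall (X Y Z : nomset) (f : X -> pset Y) (g : Y -> pset Z),
      kl_mor (nact X) (nact Y) f -> kl_mor (nact Y) (nact Z) g ->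
      Fext F (kcomp g f) = kcomp (Fext F g) (Fext F f)) /\
  (* extension: Fbar J = J F *)
  (forall (X Y : nomset) (h : X -> Y),
      equivariant (nact X) (nact Y) h ->
      Fext F (J h) = J (Fmap F h)) /\
  (* local monotonicity *)
  (forall (X Y : nomset) (f g : X -> pset Y),
      kl_mor (nact X) (nact Y) f -> kl_mor (nact X) (nact Y) g ->
      kl_le f g -> kl_le (Fext F f) (Fext F g)).
Proof.
  split; [|split; [|split; [|split; [|split]]]].
  - intro X; split.
    + apply Fact_action; exact (proj1 (nact_nominal X)).
    + apply Fact_supp; exact (proj2 (nact_nominal X)).
  - intros X Y f [Hs He]; split.
    + apply Fext_supp; exact Hs.
    + apply Fext_equiv; exact He.
  - intro X; apply functional_extensionality; intro u; apply Fext_eta.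
  - intros X Y Z f g _ _; apply functional_extensionality; intro u; apply Fext_comp.
  - intros X Y h _; apply functional_extensionality; intro u; apply Fext_J.
  - intros X Y f g _ _; apply Fext_mono.
Qed.
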